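(* Consider the multi-flow status-update queueing system described in the context with a single server ($M=1$), packet service times exponentially distributed and i.i.d. across time, and packet generation and arrival times synchronized across the $N$ flows. Let $P_1$ be a policy following the preemptive MAF-LGFS discipline and $\pi_1$ a work-conserving causal policy, both operating on the same packet generation/arrival times. Suppose that on a sample path a packet is delivered in $P_1$ and a packet is delivered in $\pi_1$ at the same time $t$. Let $\bm\Delta_{P_1}$ and $\bm\Delta'_{P_1}$ be the age vectors of $P_1$ just before and just after this delivery, and $\bm\Delta_{\pi_1}$, $\bm\Delta'_{\pi_1}$ those of $\pi_1$. If $\Delta_{[i],P_1}\le\Delta_{[i],\pi_1}$ for all $i=1,\ldots,N$, then $\Delta'_{[i],P_1}\le\Delta'_{[i],\pi_1}$ for all $i=1,\ldots,N$.
   Context: System: $N$ flows of update packets are sent through a queue with an infinite buffer and $M$ servers; each server processes one packet at a time. The $i$-th packet of flow $n$ is generated at time $S_{n,i}$, arrives at the queue at time $A_{n,i}$, and is delivered to its destination at time $D_{n,i}$, with $S_{n,i}\le A_{n,i}\le D_{n,i}$ and generation times non-decreasing in $i$. Generation and arrival times are synchronized across flows if there are sequences $\{S_i\}$, $\{A_i\}$ with $S_{n,i}=S_i$, $A_{n,i}=A_i$ for all $n,i$. A policy is work-conserving if the server is busy whenever the queue is non-empty; it is causal if decisions depend only on history and current state. Age of flow $n$: $\Delta_n(t)=t-\max\{S_{n,i}:D_{n,i}\le t\}$; the age vector is $\bm\Delta=(\Delta_1,\ldots,\Delta_N)$, and $\Delta_{[i]}$ denotes its $i$-th largest component. The preemptive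 MAF-LGFS policy serves, among all packets of all flows, the last generated packet from the flow with the maximum age (ties broken arbitrarily), preempting the packet in service when this target changes (preempted packets return to the queue). *)

(* Defs.v *)
From HB Require Import structures.
From mathcomp Require Import all_boot all_order all_algebra.
From mathcomp Require Import reals.
Set Implicit Arguments. Unset Strict Implicit. Unset Printing Implicit Defensive.
Import Order.TTheory GRing.Theory Num.Theory.
Local Open Scope ring_scope.

Section Queue.
Variable R : realType.
Variable N : nat.

(* Generation/arrival times are synchronized across flows:
   packet i of every flow is generated at S i and arrives at A i.
   A policy is described by the delivery times of the packets:
   D n i = Some d  : packet i of flow n is delivered at time d,
   D n i = None    : it is never delivered. *)

Definition synchronized (S A : nat -> R) : Prop :=
  (forall i j, (i <= j)%N -> S i <= S j) /\ (forall i, S i <= A i).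

(* Single-server (M = 1) sample path: a packet is delivered after its arrival
   (service times are exponential, hence a.s. positive), and no two packets are
   delivered at the same instant (one server processes one packet at a time). *)
Definition single_server_path (A : nat -> R) (D : 'I_N -> nat -> option R) : Prop :=
  (forall n i d, D n i = Some d -> A i < d) /\
  (forall n i m j d, D n i = Some d -> D m j = Some d -> n = m /\ i = j).

Definition delivered_before (D : 'I_N -> nat -> option R) (n : 'I_N) (i : nat) (t : R) : bool :=
  if D n i is Some d then d < t else false.

Definition delivered_by (D : 'I_N -> nat -> option R) (n : 'I_N) (i : nat) (t : R) : bool :=
  if D n i is Some d then d <= t else false.

Definition age_from (del : nat -> bool) (S : nat -> R) (t x : R) : Prop :=
  exists i, del i /\ x = t - S i /\ (forall j, del j -> S j <= S i).

Definition age_before (D : 'I_N -> nat -> option R) (S : nat -> R) (n : 'I_N) (t x : R) :=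
  age_from (fun i => delivered_before D n i t) S t x.
Definition age_after (D : 'I_N -> nat -> option R) (S : nat -> R) (n : 'I_N) (t x : R) :=
  age_from (fun i => delivered_by D n i t) S t x.

Definition in_system (A : nat -> R) (D : 'I_N -> nat -> option R) (n : 'I_N) (i : nat) (t : R) : bool :=
  (A i < t) && ~~ delivered_before D n i t.

(* The delivery at time t of packet i1 of flow n1 follows the preemptive
   MAF-LGFS discipline: just before t the server serves, among all packets in
   the system, the last generated packet of a flow with maximum age
   (aP = age vector just before t). *)
Definition maf_lgfs_delivery (S A : nat -> R) (D : 'I_N -> nat -> option R)
    (aP : 'I_N -> R) (t : R) (n1 : 'I_N) (i1 : nat) : Prop :=
  D n1 i1 = Some t /\
  (forall m, aP m <= aP n1) /\
  (forall j, in_system A D n1 j t -> S j <= S i1).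

(* k-th largest component of a vector (k = 0 is the largest), i.e. Delta_[k+1]. *)
Definition kth_largest (a : 'I_N -> R) (k : nat) : R :=
  nth 0 (sort (fun x y : R => y <= x) [seq a j | j <- enum 'I_N]) k.

End Queue.

(* Main.v *)
Require Import Defs.
From HB Require Import structures.
From mathcomp Require Import all_boot all_order all_algebra.
From mathcomp Require Import reals.
From mathcomp Require Import zify.
Import Order.TTheory GRing.Theory Num.Theory.
Local Open Scope ring_scope.

Section Aux.
Variable R : realType.

Lemma nth_count (s : seq R) k c :
  sorted (fun x y : R => y <= x) s -> (k < size s)%N ->
  (c <= nth 0 s k) = (k < count (fun x => (c <= x)%R) s)%N.
Proof.
elim: s k => [|x s IH] k //= Hs Hk.
have Hall : all (fun y => y <= x) s.
  by apply: (order_path_min _ Hs) => a b d /= h1 h2; exact: le_trans h2 h1.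
have Hs' : sorted (fun x y : R => y <= x) s by exact: (path_sorted Hs).
case: k Hk => [|k] Hk /=.
  case: (leP c x) => hcx //=.
  rewrite add0n; apply/esym/negbTE; rewrite -leqNgt leqn0 -/(nilp _) eqn0Ngt -has_count.
  apply/hasPn => y /(allP Hall) hy; rewrite -ltNge; exact: le_lt_trans hy hcx.
rewrite IH //.
case: (leP c x) => hcx //=.
have -> : count (fun x0 : R => c <= x0) s = 0%N.
  apply/eqP; rewrite -/(nilp _) eqn0Ngt -has_count; apply/hasPn => y /(allP Hall) hy.
  rewrite -ltNge; exact: le_lt_trans hy hcx.
by [].
Qed.

Variable N : nat.
Definition ind (c x : R) : nat := if c <= x then 1%N else 0%N.
Definition cnt (a : 'I_N -> R) (c : R) : nat :=
  count (fun x => (c <= x)%R) [seq a j | j <- enum 'I_N].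

Lemma cnt_split a n c : cnt a c =
  ((ind c (a n)) + \sum_(j <- enum 'I_N | j != n) (ind c (a j)))%N.
Proof.
by rewrite /cnt count_map -sum1_count big_mkcond /= (bigD1_seq n) ?mem_enum ?enum_uniq.
Qed.

Lemma cnt_eq_except a b n c : (forall j, j != n -> a j = b j) ->
  (cnt a c + (ind c (b n)) = cnt b c + (ind c (a n)))%N.
Proof.
move=> H; rewrite (cnt_split a n) (cnt_split b n).
rewrite (eq_bigr (fun j => ind c (b j))); last by move=> j /H ->.
by rewrite !(addnAC _ (\sum_(_ <- _ | _) _)) [(ind c (a n) + _)%N]addnC.
Qed.

Lemma cnt_zero a c : (forall j, a j < c) -> cnt a c = 0%N.
Proof.
move=> H; apply/eqP; rewrite /cnt -/(nilp _) eqn0Ngt -has_count.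
by apply/hasPn => y /mapP [j _ ->]; rewrite -ltNge.
Qed.

Lemma maj (aP aP' api api' : 'I_N -> R) n1 n2 x :
  (forall m, aP m <= aP n1) -> (forall m, m != n1 -> aP m = aP' m) ->
  aP' n1 <= aP n1 -> aP' n1 <= x ->
  (forall m, m != n2 -> api m = api' m) -> Num.min (api n2) x <= api' n2 ->
  (forall c, (cnt aP c <= cnt api c)%N) -> forall c, (cnt aP' c <= cnt api' c)%N.
Proof.
move=> Hmax E1 L1 L2 E2 L3 H c.
have e1 := cnt_eq_except aP aP' n1 c E1; have e2 := cnt_eq_except api api' n2 c E2.
have h := H c. rewrite /ind in e1 e2.
case: (leP c (aP' n1)) e1 => h1 e1.
  have h3 : c <= aP n1 by exact: le_trans L1.
  rewrite h3 in e1.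
  have : (c <= api n2) -> c <= api' n2.
    move=> hc; apply: le_trans L3; rewrite le_min hc /=; exact: le_trans L2.
  case: (c <= api n2) e2 => e2; last by case: (c <= api' n2) e2; lia.
  by move=> /(_ isT) hh; rewrite hh in e2; lia.
case: (leP c (aP n1)) e1 => h2 e1.
  by case: (c <= api n2) e2; case: (c <= api' n2); lia.
have := @cnt_zero aP c (fun j => le_lt_trans (Hmax j) h2); lia.
Qed.

Definition srt (a : 'I_N -> R) := sort (fun x y : R => y <= x) [seq a j | j <- enum 'I_N].

Lemma srt_cnt a c : count (fun x => (c <= x)%R) (srt a) = cnt a c.
Proof.
have /permP -> // : perm_eq (srt a) [seq a j | j <- enum 'I_N].
by rewrite /srt perm_sort.
Qed.

Lemma srt_sorted a : sorted (fun x y : R => y <= x) (srt a).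
Proof. by apply: sort_sorted => x y; exact: le_total. Qed.

Lemma srt_size a : size (srt a) = N.
Proof. by rewrite /srt size_sort size_map size_enum_ord. Qed.

Lemma kth_cnt (a b : 'I_N -> R) :
  (forall i : 'I_N, kth_largest a i <= kth_largest b i) <-> (forall c, (cnt a c <= cnt b c)%N).
Proof.
split.
  move=> H c; rewrite leqNgt; apply/negP => hlt.
  have hN : (cnt a c <= N)%N by rewrite -srt_cnt -(srt_size a) count_size.
  have hk : ((cnt a c).-1 < N)%N by lia.
  have := H (Ordinal hk); rewrite /kth_largest /= -/(srt a) -/(srt b) => hab.
  have h1 : c <= nth 0 (srt a) (cnt a c).-1.
    by rewrite nth_count ?srt_sorted ?srt_size // srt_cnt; lia.
  have : c <= nth 0 (srt b) (cnt a c).-1 by exact: le_trans hab.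
  by rewrite nth_count ?srt_sorted ?srt_size // srt_cnt; lia.
move=> H i; rewrite /kth_largest -/(srt a) -/(srt b).
have h1 : (i < cnt a (nth 0%R (srt a) i))%N.
  by rewrite -srt_cnt -nth_count ?srt_sorted ?srt_size.
rewrite nth_count ?srt_sorted ?srt_size // srt_cnt.
exact: leq_trans h1 (H _).
Qed.

Lemma age_mono (p q : nat -> bool) (S : nat -> R) (t x y : R) :
  age_from p S t x -> age_from q S t y -> (forall i, p i -> q i) -> y <= x.
Proof.
move=> [ip [hp [-> _]]] [iq [hq [-> Hq]]] H.
by rewrite lerD2l lerN2; apply: Hq; apply: H.
Qed.

Lemma age_pkt (q : nat -> bool) (S : nat -> R) (t y : R) j : age_from q S t y -> q j -> y <= t - S j.
Proof. by move=> [iq [hq [-> Hq]]] hj; rewrite lerD2l lerN2; apply: Hq. Qed.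

Lemma before_by (D : 'I_N -> nat -> option R) n j t :
  delivered_before D n j t -> delivered_by D n j t.
Proof. by rewrite /delivered_before /delivered_by; case: (D n j) => // d; exact: ltW. Qed.

Lemma before_by_eq (D : 'I_N -> nat -> option R) n j t : D n j <> Some t ->
  delivered_before D n j t = delivered_by D n j t.
Proof.
rewrite /delivered_before /delivered_by; case: (D n j) => // d H.
rewrite le_eqVlt; case: eqP => [e|] /=; last by []. by rewrite e in H.
Qed.

Lemma age_same (D : 'I_N -> nat -> option R) (S A : nat -> R) n n1 i1 (t x y : R) :
  single_server_path A D -> D n1 i1 = Some t -> n != n1 ->
  age_before D S n t x -> age_after D S n t y -> x = y.
Proof.
move=> [_ Hs] H1 hn hx hy; apply/eqP; rewrite eq_le; apply/andP; split.
  apply: (age_mono (fun i => delivered_by D n i t) (fun i => delivered_before D n i t) S t y x hy hx) => i; rewrite before_by_eq // => hD.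
  by move: (Hs _ _ _ _ _ hD H1) => [e _]; rewrite e eqxx in hn.
apply: (age_mono (fun i => delivered_before D n i t) (fun i => delivered_by D n i t) S t x y hx hy); move=> i /= h; exact: before_by h.
Qed.

End Aux.
Arguments age_same {R N D S A n n1 i1 t x y}.
Arguments age_mono {R p q S t x y}.
Arguments age_pkt {R q S t y j}.
Arguments before_by {R N D n j t}.

Theorem lemma2 (R : realType) (N : nat) (S A : nat -> R)
    (DP Dpi : 'I_N -> nat -> option R) (t : R)
    (n1 : 'I_N) (i1 : nat) (n2 : 'I_N) (i2 : nat)
    (aP aP' api api' : 'I_N -> R) :
  synchronized S A ->
  single_server_path A DP ->
  single_server_path A Dpi ->
  (forall n, age_before DP S n t (aP n)) ->
  (forall n, age_after DP S n t (aP' n)) ->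
  (forall n, age_before Dpi S n t (api n)) ->
  (forall n, age_after Dpi S n t (api' n)) ->
  maf_lgfs_delivery S A DP aP t n1 i1 ->
  Dpi n2 i2 = Some t ->
  (forall i : 'I_N, kth_largest aP i <= kth_largest api i) ->
  forall i : 'I_N, kth_largest aP' i <= kth_largest api' i.
Proof.
move=> _ HP Hpi haP haP' hapi hapi' [HD1 [Hmax Hsys]] HD2 Hk.
apply/kth_cnt; move: Hk => /kth_cnt Hk.
apply: (@maj R N aP aP' api api' n1 n2 (t - S i2)) => //.
- move=> m hm; exact: (age_same HP HD1 hm (haP m) (haP' m)).
- apply: (age_mono (haP n1) (haP' n1)); move=> i /= h; exact: before_by h.
- case hb: (delivered_before DP n1 i2 t).
    by apply: (age_pkt (haP' n1)); exact: before_by.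
  have hA : A i2 < t by case: Hpi => H _; exact: H HD2.
  have hS : S i2 <= S i1 by apply: Hsys; rewrite /in_system hA hb.
  apply: le_trans (age_pkt (j:=i1) (haP' n1) _) _.
    by rewrite /= /delivered_by HD1.
  by rewrite lerD2l lerN2.
- move=> m hm; exact: (age_same Hpi HD2 hm (hapi m) (hapi' m)).
- case: (hapi' n2) => k [hk [-> _]].
  move: hk; rewrite /delivered_by; case E: (Dpi n2 k) => [d|] // hd.
  move: hd; rewrite le_eqVlt => /orP [/eqP ed|ld].
    rewrite ed in E; case: Hpi => _ Hs; case: (Hs _ _ _ _ _ E HD2) => _ ->.
    by rewrite ge_min lexx orbT.
  have : api n2 <= t - S k.
    by apply: (age_pkt (hapi n2)); rewrite /delivered_before E.
  by move=> h; rewrite ge_min h.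
Qed.
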